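(* In the setting below, let $L_{\Sigma_1,\alpha_1}$ be any finite-dimensional Krein subspace of $L_{\Sigma_1}$. Then there exists a finite-dimensional Krein subspace $L_{\Sigma,\alpha}$ of $L_\Sigma$ such that for every $\phi\in L_{\Sigma_1,\alpha_1}$ there are $\phi',\phi''\in L_{\Sigma,\alpha}$ with $$u_M(\phi,\phi',\phi'')=(u_{M_1}(\phi),\phi'',\phi').$$
   Context: A classical free fermionic field theory on a spacetime system is given as follows. To each (oriented) hypersurface $\Sigma$ is associated a real separable Krein space $(L_\Sigma,g_\Sigma)$ (a real inner product space with an orthogonal decomposition $L_\Sigma=L_{\Sigma,+}\oplus L_{\Sigma,-}$, $g_\Sigma$ positive definite and complete on $L_{\Sigma,+}$, negative definite and complete on $L_{\Sigma,-}$). A finite-dimensional Krein subspace is a finite-dimensional subspace on which $g_\Sigma$ is non-degenerate. For $\overline{\Sigma}$, $L_{\overline\Sigma}$ is identified with $L_\Sigma$ as a vector space with $g_{\overline\Sigma}=-g_\Sigma$. If $\Sigma$ decomposes as $\Sigma_1\cup\cdots\cup\Sigma_n$, then $L_\Sigma\cong L_{\Sigma_1}\oplus\cdots\oplus L_{\Sigma_n}$ isometrically. To each region $N$ is associated a real vector space $L_N$ and a linear map $r_N:L_N\to L_{\partial N}$ whose image $L_{\tilde N}$ is a hypermaximal neutral subspace of $L_{\partial N}$ ($g_{\partial N}$ vanishes on it and it equals its own orthogonal complement). For a region $N$, $u_N:L_{\partial N}\to L_{\partial N}$ is the unique linear map with $u_N^2=\mathrm{id}$, mapping $L_{\partial N,\pm}$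 onto $L_{\partial N,\mp}$ with $g_{\partial N}(u_Nx,u_Ny)=-g_{\partial N}(x,y)$, and equal to the identity on $L_{\tilde N}$. Setting: $M$ is a region with boundary decomposing as a disjoint union $\partial M=\Sigma_1\cup\Sigma\cup\overline{\Sigma'}$, $\Sigma'$ a copy of $\Sigma$, and $M_1$ is the region obtained by gluing $M$ to itself along $\Sigma,\overline{\Sigma'}$ (so $\partial M_1=\Sigma_1$). Elements of $L_{\partial M}=L_{\Sigma_1}\oplus L_\Sigma\oplus L_{\overline{\Sigma'}}$ are written as triples, with $L_{\overline{\Sigma'}}$ identified with $L_\Sigma$. Gluing axiom: there is an injective linear map $r_{M;\Sigma,\overline{\Sigma'}}:L_{M_1}\to L_M$ whose image is exactly the set of $x\in L_M$ for which the $L_\Sigma$- and $L_{\overline{\Sigma'}}$-components of $r_M(x)$ coincide, and such that $r_{M_1}$ equals $r_M\circ r_{M;\Sigma,\overline{\Sigma'}}$ followed by the projection onto $L_{\Sigma_1}$. *)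

(* Defs.v *)
From mathcomp Require Import all_boot all_algebra.
From mathcomp Require Import reals.
Set Implicit Arguments. Unset Strict Implicit. Unset Printing Implicit Defensive.
Import GRing.Theory Num.Theory.
Local Open Scope ring_scope.

Section KreinDefs.
Variables (R : realType) (V : lmodType R).

Definition is_subspace (S : V -> Prop) : Prop :=
  S 0 /\ forall (a : R) x y, S x -> S y -> S (a *: x + y).

Definition sym_bilinear (g : V -> V -> R) : Prop :=
  (forall x y, g x y = g y x) /\
  (forall (a : R) x y z, g (a *: x + y) z = a * g x z + g y z).

(* completeness of the subspace S for the norm sqrt (s * g x x), s = +-1 *)
Definition complete_wrt (g : V -> V -> R) (s : R) (S : V -> Prop) : Prop :=
  forall u : nat -> V, (forall n, S (u n)) ->
    (forall e : R, 0 < e -> exists N, forall m n, (N <= m)%N -> (N <= n)%N ->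
        Num.sqrt (s * g (u m - u n) (u m - u n)) < e) ->
    exists l, S l /\ forall e : R, 0 < e -> exists N, forall n, (N <= n)%N ->
        Num.sqrt (s * g (u n - l) (u n - l)) < e.

Definition is_krein (g : V -> V -> R) (Lp Lm : V -> Prop) : Prop :=
  [/\ sym_bilinear g /\ is_subspace Lp /\ is_subspace Lm,
      ((forall x, exists xp xm, [/\ Lp xp, Lm xm & x = xp + xm]) /\
       (forall x, Lp x -> Lm x -> x = 0)),
      (forall xp xm, Lp xp -> Lm xm -> g xp xm = 0) /\
      ((forall x, Lp x -> x <> 0 -> 0 < g x x) /\
       (forall x, Lm x -> x <> 0 -> g x x < 0)),
      (complete_wrt g 1 Lp /\ complete_wrt g (-1) Lm) &
      exists d : nat -> V, forall x (e : R), 0 < e -> exists n,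
        forall xp xm, Lp xp -> Lm xm -> x - d n = xp + xm ->
          Num.sqrt (g xp xp - g xm xm) < e].

Definition fd_krein_subspace (g : V -> V -> R) (W : V -> Prop) : Prop :=
  [/\ is_subspace W,
      (exists s : seq V, forall x,
          W x <-> exists c : 'I_(size s) -> R, x = \sum_(i < size s) c i *: s`_i) &
      (forall w, W w -> (forall v, W v -> g w v = 0) -> w = 0)].

Definition hypermaximal_neutral (g : V -> V -> R) (L : V -> Prop) : Prop :=
  is_subspace L /\
  (forall x y, L x -> L y -> g x y = 0) /\
  (forall y, (forall x, L x -> g x y = 0) -> L y).

(* u is "the" map u_N associated with the Krein space (V,g,Lp,Lm) and the
   hypermaximal neutral subspace Lt = L_{tilde N} *)
Definition is_u_map (g : V -> V -> R) (Lp Lm Lt : V -> Prop) (u : V -> V) : Prop :=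
  [/\ (forall (a : R) x y, u (a *: x + y) = a *: u x + u y) /\
      (forall x, u (u x) = x),
      ((forall x, Lp x -> Lm (u x)) /\ (forall y, Lm y -> exists x, Lp x /\ u x = y)),
      ((forall x, Lm x -> Lp (u x)) /\ (forall y, Lp y -> exists x, Lm x /\ u x = y)),
      (forall x y, g (u x) (u y) = - g x y) &
      (forall x, Lt x -> u x = x)].

End KreinDefs.

Definition is_linear (R : realType) (U V : lmodType R) (f : U -> V) : Prop :=
  forall (a : R) x y, f (a *: x + y) = a *: f x + f y.

Definition image_of (A B : Type) (f : A -> B) : B -> Prop :=
  fun y => exists x, f x = y.

(* Krein structure on L_{dM} = L_{Sigma1} (+) L_Sigma (+) L_{bar Sigma'},
   with L_{bar Sigma'} identified with L_Sigma and carrying -g_Sigma *)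
Section Boundary.
Variables (R : realType) (L1 LS : lmodType R).
Variables (g1 : L1 -> L1 -> R) (gS : LS -> LS -> R).
Variables (L1p L1m : L1 -> Prop) (LSp LSm : LS -> Prop).

Definition bdry_form (x y : L1 * LS * LS) : R :=
  g1 x.1.1 y.1.1 + gS x.1.2 y.1.2 - gS x.2 y.2.
Definition bdry_plus (x : L1 * LS * LS) : Prop :=
  [/\ L1p x.1.1, LSp x.1.2 & LSm x.2].
Definition bdry_minus (x : L1 * LS * LS) : Prop :=
  [/\ L1m x.1.1, LSm x.1.2 & LSp x.2].
End Boundary.

(* Main.v *)
Require Import Defs.
From mathcomp Require Import all_boot all_algebra.
From mathcomp Require Import all_order reals.
From Stdlib Require Import ClassicalEpsilon.
Import Order.TTheory GRing.Theory Num.Theory.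
Local Open Scope ring_scope.
Set Implicit Arguments. Unset Strict Implicit.

Section Gen.
Variables (R : realType) (V : lmodType R).

Lemma lin0 (u : V -> V) : (forall (a : R) x y, u (a *: x + y) = a *: u x + u y) -> u 0 = 0.
Proof. move=> h; have := h 1 0 0; rewrite scale1r !addr0.
move/(congr1 (fun z => z - u 0)). rewrite /= subrr addrK scale1r. by move=> <-. Qed.

Lemma linD (u : V -> V) : (forall (a : R) x y, u (a *: x + y) = a *: u x + u y) ->
  forall x y, u (x + y) = u x + u y.
Proof. by move=> h x y; have := h 1 x y; rewrite !scale1r. Qed.

Lemma linZ (u : V -> V) : (forall (a : R) x y, u (a *: x + y) = a *: u x + u y) ->
  forall a x, u (a *: x) = a *: u x.
Proof. by move=> h a x; have := h a x 0; rewrite !addr0 (lin0 h) addr0. Qed.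

Lemma linN (u : V -> V) : (forall (a : R) x y, u (a *: x + y) = a *: u x + u y) ->
  forall x, u (- x) = - u x.
Proof. by move=> h x; rewrite -scaleN1r (linZ h) scaleN1r. Qed.

Lemma linB (u : V -> V) : (forall (a : R) x y, u (a *: x + y) = a *: u x + u y) ->
  forall x y, u (x - y) = u x - u y.
Proof. by move=> h x y; rewrite (linD h) (linN h). Qed.

Lemma sub0 (S : V -> Prop) : is_subspace S -> S 0. Proof. by case. Qed.
Lemma subD (S : V -> Prop) : is_subspace S -> forall x y, S x -> S y -> S (x + y).
Proof. by case=> _ h x y Hx Hy; have := h 1 x y Hx Hy; rewrite scale1r. Qed.
Lemma subZ (S : V -> Prop) : is_subspace S -> forall a x, S x -> S (a *: x).
Proof. case=> h0 h a x Hx; have := h a x 0 Hx h0; by rewrite addr0. Qed.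
Lemma subN (S : V -> Prop) : is_subspace S -> forall x, S x -> S (- x).
Proof. by move=> h x Hx; rewrite -scaleN1r; apply: subZ. Qed.
Lemma subB (S : V -> Prop) : is_subspace S -> forall x y, S x -> S y -> S (x - y).
Proof. by move=> h x y Hx Hy; apply: subD => //; apply: subN. Qed.

Lemma decomp_uniq (Lp Lm : V -> Prop) : is_subspace Lp -> is_subspace Lm ->
  (forall x, Lp x -> Lm x -> x = 0) ->
  forall x1 x2 y1 y2, Lp x1 -> Lp x2 -> Lm y1 -> Lm y2 -> x1 + y1 = x2 + y2 ->
  x1 = x2 /\ y1 = y2.
Proof.
move=> hp hm hd x1 x2 y1 y2 p1 p2 m1 m2 e.
have E : x1 - x2 = y2 - y1.
  have -> : x1 = x2 + y2 - y1 by rewrite -e addrK.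
  by rewrite addrC -addrA addKr.
have z : x1 - x2 = 0.
  apply: hd; first by apply: subB.
  by rewrite E; apply: subB.
split; first by apply/eqP; rewrite -subr_eq0 z.
by apply/eqP; rewrite eq_sym -subr_eq0 -E z.
Qed.

Variables (g : V -> V -> R) (Lp Lm Lt : V -> Prop) (u : V -> V).
Hypotheses (hp : is_subspace Lp) (hm : is_subspace Lm)
  (hd : forall x, Lp x -> Lm x -> x = 0)
  (hu : is_u_map g Lp Lm Lt u) (hLt : hypermaximal_neutral g Lt).

Lemma u_fix v : u v = v -> Lt v.
Proof.
move=> uv; case: hLt => _ [_ h]; apply: h => x Lx.
case: hu => _ _ _ hg hid.
have := hg x v; rewrite (hid x Lx) uv => /eqP.
rewrite -subr_eq0 opprK -mulr2n -mulr_natr mulf_eq0 pnatr_eq0 orbF.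
by move/eqP.
Qed.

Lemma lemB b bp bm : u b = - b -> b = bp + bm -> Lp bp -> Lm bm -> Lt (bp - bm).
Proof.
move=> ub eb pb mb; case: hu => [[hl hi] [hpm _] [hmp _] _ _].
have : - bp + - bm = u bm + u bp.
  by rewrite -(linD hl) (addrC bm) -eb ub eb opprD.
move/(decomp_uniq hp hm hd (subN hp pb) (hmp _ mb) (subN hm mb) (hpm _ pb)) => [e1 e2].
apply: u_fix; rewrite (linB hl) -e1 -e2 opprK addrC //.
Qed.

Lemma lemC v vp vm : Lt v -> v = vp + vm -> Lp vp -> Lm vm -> u (vp - vm) = - (vp - vm).
Proof.
move=> lv ev pv mv; case: hu => [[hl hi] [hpm _] [hmp _] _ hid].
have : vp + vm = u vm + u vp by rewrite -(linD hl) (addrC vm) -ev (hid _ lv).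
move/(decomp_uniq hp hm hd pv (hmp _ mv) mv (hpm _ pv)) => [e1 e2].
by rewrite (linB hl) -e1 -e2 opprB.
Qed.

End Gen.

Section Span.
Variables (R : realType) (V : lmodType R).

Definition span (t : seq V) (x : V) : Prop :=
  exists c : 'I_(size t) -> R, x = \sum_(i < size t) c i *: t`_i.

Lemma span_sub t : is_subspace (span t).
Proof.
split.
  by exists (fun=> 0); rewrite big1 // => i _; rewrite scale0r.
move=> a x y [c ->] [d ->]; exists (fun i => a * c i + d i).
rewrite scaler_sumr -big_split; apply: eq_bigr => i _.
by rewrite scalerDl scalerA.
Qed.

Lemma span_mem t x : x \in t -> span t x.
Proof.
move=> xt; have hk : (index x t < size t)%N by rewrite index_mem.
exists (fun i => if i == Ordinal hk then 1 else 0).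
rewrite (bigD1 (Ordinal hk)) //= eqxx scale1r big1 ?addr0 ?nth_index //.
by move=> i /negbTE ->; rewrite scale0r.
Qed.

Variables (g : V -> V -> R) (Lp Lm : V -> Prop).
Hypothesis hK : is_krein g Lp Lm.

Lemma g0l z : g 0 z = 0.
Proof.
case: hK => [[[_ hl] _] _ _ _ _].
have := hl 1 0 0 z; rewrite scale1r addr0 mul1r.
by move/(congr1 (fun r => r - g 0 z)); rewrite /= subrr addrK => <-.
Qed.

Lemma gDl x y z : g (x + y) z = g x z + g y z.
Proof. case: hK => [[[_ hl] _] _ _ _ _]; by have := hl 1 x y z; rewrite scale1r mul1r. Qed.

Lemma gNl x z : g (- x) z = - g x z.
Proof.
case: hK => [[[_ hl] _] _ _ _ _]; have := hl (-1) x 0 z.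
by rewrite addr0 g0l addr0 scaleN1r mulN1r.
Qed.

Lemma gsym x y : g x y = g y x.
Proof. by case: hK => [[[hs _] _] _ _ _ _]. Qed.

Lemma gp_ge0 x : Lp x -> 0 <= g x x.
Proof.
case: hK => [_ _ [_ [hpos _]] _ _] px.
case: (eqVneq x 0) => [->|nz]; first by rewrite g0l.
by apply: ltW; apply: hpos => // e; move: nz; rewrite e eqxx.
Qed.

Lemma gm_le0 x : Lm x -> g x x <= 0.
Proof.
case: hK => [_ _ [_ [_ hneg]] _ _] mx.
case: (eqVneq x 0) => [->|nz]; first by rewrite g0l.
by apply: ltW; apply: hneg => // e; move: nz; rewrite e eqxx.
Qed.

Lemma span_nondeg t : (forall i : 'I_(size t), Lp t`_i \/ Lm t`_i) ->
  forall w, span t w -> (forall v, span t v -> g w v = 0) -> w = 0.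
Proof.
move=> ht w [c ew] hw.
have [[hsb [hp hm]] [hdc hd] [horth [hpos hneg]] hcp hsep] := hK.
pose wp := \sum_(i < size t) (if excluded_middle_informative (Lp t`_i) then c i *: t`_i else 0).
pose wm := \sum_(i < size t) (if excluded_middle_informative (Lp t`_i) then 0 else c i *: t`_i).
have ewpm : w = wp + wm.
  rewrite ew /wp /wm -big_split; apply: eq_bigr => i _.
  by case: (excluded_middle_informative (Lp t`_i)) => ? /=; rewrite ?addr0 ?add0r.
have pwp : Lp wp.
  apply: (big_ind (fun x => Lp x)); [exact: sub0 | exact: subD | move=> i _].
  case: (excluded_middle_informative (Lp t`_i)) => h /=; [exact: subZ | exact: sub0].
have mwm : Lm wm.
  apply: (big_ind (fun x => Lm x)); [exact: sub0 | exact: subD | move=> i _].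
  case: (excluded_middle_informative (Lp t`_i)) => h /=; first exact: sub0.
  by apply: subZ => //; case: (ht i).
have swp : span t wp.
  exists (fun i : 'I_(size t) => if excluded_middle_informative (Lp t`_i) then c i else 0).
  by apply: eq_bigr => i _; case: (excluded_middle_informative (Lp t`_i)) => ? /=; rewrite ?scale0r.
have swm : span t wm.
  exists (fun i : 'I_(size t) => if excluded_middle_informative (Lp t`_i) then 0 else c i).
  by apply: eq_bigr => i _; case: (excluded_middle_informative (Lp t`_i)) => ? /=; rewrite ?scale0r.
have o1 : g wp wm = 0 by apply: horth.
have o2 : g wm wp = 0 by rewrite gsym.
have : g w (wp - wm) = 0 by apply: hw; apply: subB => //; exact: span_sub.
rewrite ewpm gDl !(gsym _ (wp - wm)) !gDl !gNl o1 o2 subr0 sub0r.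
move=> e.
have gp := gp_ge0 pwp; have gm := gm_le0 mwm.
have e1 : g wp wp = 0.
  apply/eqP; rewrite eq_le gp andbT.
  have : g wp wp = g wm wm by apply/eqP; rewrite -subr_eq0 e.
  by move=> ->.
have e2 : g wm wm = 0.
  by move: e; rewrite e1 sub0r => /eqP; rewrite oppr_eq0 => /eqP.
have z1 : wp = 0.
  by case: (eqVneq wp 0) => // nz; have := hpos _ pwp (fun E => negP nz (introT eqP E)); rewrite e1 ltxx.
have z2 : wm = 0.
  by case: (eqVneq wm 0) => // nz; have := hneg _ mwm (fun E => negP nz (introT eqP E)); rewrite e2 ltxx.
by rewrite z1 z2 addr0.
Qed.

Lemma fd_cover (s : seq V) : exists W, fd_krein_subspace g W /\ forall x, x \in s -> W x.
Proof.
case: hK => [[_ [hp hm]] [hdec hd] _ _ _].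
have hdec' : forall x, exists p : V * V, [/\ Lp p.1, Lm p.2 & x = p.1 + p.2].
  by move=> x; have [xp [xm [? ? ?]]] := hdec x; exists (xp, xm).
pose dec x := proj1_sig (constructive_indefinite_description _ (hdec' x)).
have decP x : [/\ Lp (dec x).1, Lm (dec x).2 & x = (dec x).1 + (dec x).2].
  exact: (proj2_sig (constructive_indefinite_description _ (hdec' x))).
pose t := flatten [seq [:: (dec x).1; (dec x).2] | x <- s].
exists (span t); split; last first.
  move=> x xs; have [_ _ ->] := decP x.
  apply: subD; first exact: span_sub.
    by apply: span_mem; apply/flatten_mapP; exists x => //; rewrite !inE eqxx.
  by apply: span_mem; apply/flatten_mapP; exists x => //; rewrite !inE eqxx orbT.
split; first exact: span_sub.
  by exists t.
apply: span_nondeg => i.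
have : t`_i \in t by apply: mem_nth.
move/flatten_mapP => [x _]; rewrite !inE => /orP [] /eqP ->; have [? ? _] := decP x.
  by left. by right.
Qed.

End Span.

Lemma half (R : realType) (V : lmodType R) (v : V) : 2^-1 *: (v + v) = v.
Proof.
by rewrite -mulr2n -scaler_nat scalerA mulVf ?scale1r // pnatr_eq0.
Qed.

Lemma sumdiff (R : realType) (V : lmodType R) (v w : V) : (v + w) + (v - w) = v + v.
Proof. by rewrite addrACA subrr addr0. Qed.

Lemma diffsum (R : realType) (V : lmodType R) (v w : V) : (v + w) - (v - w) = w + w.
Proof. by rewrite opprB (addrC v) addrACA subrr addr0. Qed.

Theorem mainTheorem2
  (R : realType)
  (L1 LS : lmodType R)
  (g1 : L1 -> L1 -> R) (L1p L1m : L1 -> Prop)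
  (gS : LS -> LS -> R) (LSp LSm : LS -> Prop)
  (hK1 : is_krein g1 L1p L1m) (hKS : is_krein gS LSp LSm)
  (LM : lmodType R) (rM : LM -> L1 * LS * LS)
  (hrM_lin : is_linear rM)
  (hrM_hyp : hypermaximal_neutral (bdry_form g1 gS) (image_of rM))
  (LM1 : lmodType R) (rM1 : LM1 -> L1)
  (hrM1_lin : is_linear rM1)
  (hrM1_hyp : hypermaximal_neutral g1 (image_of rM1))
  (rglue : LM1 -> LM)
  (hglue_lin : is_linear rglue)
  (hglue_inj : injective rglue)
  (hglue_img : forall x : LM, image_of rglue x <-> (rM x).1.2 = (rM x).2)
  (hglue_r : forall y : LM1, rM1 y = (rM (rglue y)).1.1)
  (uM : L1 * LS * LS -> L1 * LS * LS)
  (huM : is_u_map (bdry_form g1 gS) (bdry_plus L1p LSp LSm)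
                  (bdry_minus L1m LSp LSm) (image_of rM) uM)
  (uM1 : L1 -> L1)
  (huM1 : is_u_map g1 L1p L1m (image_of rM1) uM1)
  (W1 : L1 -> Prop) (hW1 : fd_krein_subspace g1 W1) :
  exists W : LS -> Prop,
    fd_krein_subspace gS W /\
    forall phi, W1 phi ->
      exists phi' phi'', [/\ W phi', W phi'' &
        uM (phi, phi', phi'') = (uM1 phi, phi'', phi')].
Proof.
have [[_ [h1p h1m]] [hdec1 hdis1] _ _ _] := hK1.
have [[_ [hSp hSm]] [hdecS hdisS] _ _ _] := hKS.
have [[hl hi] _ _ _ hid] := huM.
have [[hl1 hi1] _ _ _ hid1] := huM1.
have hbp : is_subspace (bdry_plus L1p LSp LSm).
  split; first by split; apply: sub0.
  by move=> a x y [? ? ?] [? ? ?]; split; [apply: h1p.2 | apply: hSp.2 | apply: hSm.2].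
have hbm : is_subspace (bdry_minus L1m LSp LSm).
  split; first by split; apply: sub0.
  by move=> a x y [? ? ?] [? ? ?]; split; [apply: h1m.2 | apply: hSm.2 | apply: hSp.2].
have hbd : forall x, bdry_plus L1p LSp LSm x -> bdry_minus L1m LSp LSm x -> x = 0.
  move=> [[x1 x2] x3] [/= ? ? ?] [/= ? ? ?].
  by rewrite (hdis1 x1) // (hdisS x2) // (hdisS x3).
have key : forall phi, exists p : LS * LS, uM (phi, p.1, p.2) = (uM1 phi, p.2, p.1).
  move=> phi.
  pose a := phi + uM1 phi.
  have ua : uM1 a = a by rewrite /a (linD hl1) hi1 addrC.
  have [y ey] : image_of rM1 a := u_fix huM1 hrM1_hyp ua.
  destruct (rM (rglue y)) as [[x1 x2] x3] eqn:EX.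
  have X1 : x1 = a by rewrite -ey hglue_r EX.
  have X23 : x2 = x3.
    by have := (hglue_img (rglue y)).1 (ex_intro _ y erefl); rewrite EX.
  have uX : uM (x1, x2, x3) = (x1, x2, x3) by apply: hid; exists (rglue y).
  pose b := phi - uM1 phi.
  have ub : uM1 b = - b by rewrite /b (linB hl1) hi1 opprB.
  have [bp [bm [pb mb eb]]] := hdec1 b.
  have [z ez] : image_of rM1 (bp - bm) := lemB h1p h1m hdis1 huM1 hrM1_hyp ub eb pb mb.
  destruct (rM (rglue z)) as [[z1 z2] z3] eqn:EZ.
  have Z1 : z1 = bp - bm by rewrite -ez hglue_r EZ.
  have Z23 : z2 = z3.
    by have := (hglue_img (rglue z)).1 (ex_intro _ z erefl); rewrite EZ.
  have [rp [rm [pr mr er]]] := hdecS z2.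
  have eZ : (z1, z2, z3) = (bp, rp, rm) + (- bm, rm, rp).
    rewrite Z1 -Z23 er; transitivity (bp - bm, rp + rm, rm + rp); last by [].
    by rewrite (addrC rm).
  have pv : bdry_plus L1p LSp LSm (bp, rp, rm) by split.
  have mv : bdry_minus L1m LSp LSm (- bm, rm, rp) by split => //; apply: subN.
  have lZ : image_of rM (z1, z2, z3) by exists (rglue z).
  have uw := lemC hbp hbm hbd huM lZ eZ pv mv.
  exists (2^-1 *: (x2 + (rp - rm)), 2^-1 *: (x2 + (rm - rp))) => /=.
  have E : (phi, 2^-1 *: (x2 + (rp - rm)), 2^-1 *: (x2 + (rm - rp)))
         = 2^-1 *: ((x1, x2, x3) + ((bp, rp, rm) - (- bm, rm, rp))).
    rewrite -X23.
    have -> : phi = 2^-1 *: (x1 + (bp - - bm)).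
      by rewrite opprK -eb X1 /a /b sumdiff half.
    reflexivity.
  rewrite E (linZ hl) (linD hl) uX uw.
  have -> : uM1 phi = 2^-1 *: (x1 - (bp - - bm)).
    by rewrite opprK -eb X1 /a /b diffsum half.
  rewrite -X23 -[in X in _ = (_, _, X)](opprB rm rp) -[in X in _ = (_, X, _)](opprB rp rm).
  reflexivity.
have hdef : forall phi, exists p : LS * LS, uM (phi, p.1, p.2) = (uM1 phi, p.2, p.1) := key.
pose F phi := proj1_sig (constructive_indefinite_description _ (hdef phi)).
have FP phi : uM (phi, (F phi).1, (F phi).2) = (uM1 phi, (F phi).2, (F phi).1).
  exact: (proj2_sig (constructive_indefinite_description _ (hdef phi))).
have [_ [es hes] _] := hW1.
have [W [hW hWs]] := fd_cover hKS (flatten [seq [:: (F e).1; (F e).2] | e <- es]).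
have [hWsub _ _] := hW.
exists W; split => // phi /hes [c ->].
apply: (big_ind (fun x => exists phi' phi'', [/\ W phi', W phi'' &
        uM (x, phi', phi'') = (uM1 x, phi'', phi')])).
- exists 0, 0; split; try exact: sub0.
  rewrite (lin0 hl1); exact: (lin0 hl).
- move=> x y [x' [x'' [wx' wx'' ex]]] [y' [y'' [wy' wy'' ey]]].
  exists (x' + y'), (x'' + y''); split; try exact: subD.
  have -> : (x + y, x' + y', x'' + y'') = (x, x', x'') + (y, y', y'') by [].
  by rewrite (linD hl) ex ey (linD hl1).
- move=> i _.
  have ein : es`_i \in es by apply: mem_nth.
  exists (c i *: (F es`_i).1), (c i *: (F es`_i).2); split.
  + apply: subZ => //; apply: hWs; apply/flatten_mapP; exists es`_i => //.
    by rewrite !inE eqxx.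
  + apply: subZ => //; apply: hWs; apply/flatten_mapP; exists es`_i => //.
    by rewrite !inE eqxx orbT.
  have -> : (c i *: es`_i, c i *: (F es`_i).1, c i *: (F es`_i).2)
          = c i *: (es`_i, (F es`_i).1, (F es`_i).2) by [].
  by rewrite (linZ hl) FP (linZ hl1).
Qed.
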